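(* Let $T$ and $Q$ be selfadjoint bounded operators on a Hilbert space $V$, and assume $Q$ is nonnegative. Then the operator $A:=Q(I+iT)^{-1}\in\mathcal{L}(V)$ is sectorial of some angle $\theta<\frac{\pi}{2}$.
   Context: A closed linear operator $A$ on a Banach space is sectorial of angle $\theta\in(0,\pi)$ if $\sigma(A)\subseteq\Sigma_\theta:=\{z\in\mathbb{C}:|\arg z|\le\theta\}$ and for every $\theta'\in(\theta,\pi)$ one has $\sup_{z\notin\Sigma_{\theta'}}\|zR(z,A)\|<\infty$, where $R(z,A)=(z-A)^{-1}$. *)

(* Defs.v *)
From mathcomp Require Import complex.
From mathcomp Require Import all_boot all_algebra.
From mathcomp Require Import all_classical all_reals all_analysis.
From mathcomp Require Import all_order.
Import Order.TTheory GRing.Theory Num.Theory.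
Import numFieldNormedType.Exports.

Set Implicit Arguments.
Unset Strict Implicit.
Unset Printing Implicit Defensive.

Local Open Scope ring_scope.
Local Open Scope complex_scope.
Local Open Scope classical_set_scope.

Section OperatorDefs.
Variable R : realType.
Variable V : normedModType R[i].

Definition inner_product (ip : V -> V -> R[i]) : Prop :=
  [/\ forall (a : R[i]) (x y z : V), ip (a *: x + y) z = a * ip x z + ip y z,
      forall x y : V, ip y x = (ip x y)^*
    & forall x : V, ip x x = `|x| ^+ 2].

Definition bounded_op (A : V -> V) : Prop :=
  (forall (a : R[i]) (x y : V), A (a *: x + y) = a *: A x + A y) /\
  exists M : R, forall x : V, `|A x| <= M%:C * `|x|.

Definition selfadjoint (ip : V -> V -> R[i]) (A : V -> V) : Prop :=
  forall x y : V, ip (A x) y = ip x (A y).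

Definition is_inverse (B S : V -> V) : Prop :=
  (forall x, S (B x) = x) /\ (forall x, B (S x) = x).

Definition resolvent_set (A : V -> V) : set R[i] :=
  [set z | exists S, bounded_op S /\ is_inverse (fun x => z *: x - A x) S].

Definition spectrum (A : V -> V) : set R[i] := ~` resolvent_set A.

(* closed sector Sigma_theta = {z : |arg z| <= theta} (0 included) *)
Definition sector (theta : R) : set R[i] :=
  [set z | z = 0 \/
     exists phi : R, `|phi| <= theta /\ z = `|z| * ((cos phi) +i* (sin phi))].

(* sectorial of angle theta, for an operator in L(V) (hence closed) *)
Definition sectorial (A : V -> V) (theta : R) : Prop :=
  [/\ bounded_op A, 0 < theta < pi,
      spectrum A `<=` sector theta &
      forall theta' : R, theta < theta' < pi ->
        exists M : R, forall z : R[i], ~ sector theta' z ->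
          forall S, bounded_op S -> is_inverse (fun x => z *: x - A x) S ->
          forall x, `|z *: S x| <= M%:C * `|x| ].

End OperatorDefs.

(* Main.v *)
Require Import Defs.
From mathcomp Require Import complex.
From mathcomp Require Import all_boot all_algebra.
From mathcomp Require Import all_classical all_reals all_analysis.
From mathcomp Require Import all_order.
From mathcomp Require Import ring lra.
Import Order.TTheory GRing.Theory Num.Theory.
Import numFieldNormedType.Exports.
Local Open Scope ring_scope.
Local Open Scope complex_scope.
Local Open Scope classical_set_scope.
Set Implicit Arguments.
Unset Strict Implicit.
Unset Printing Implicit Defensive.

Section Basics.
Variables (R : realType) (V : completeNormedModType R[i]) (ip : V -> V -> R[i]).

Definition nv (x : V) : R := complex.Re `|x|.

Lemma real_ge0E (a : R[i]) : 0 <= a -> a = (complex.Re a)%:C.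
Proof. by move=> h; rewrite RRe_real // ger0_real. Qed.

Lemma normE x : `|x| = (nv x)%:C.
Proof. exact: real_ge0E. Qed.

Lemma nv_ge0 x : 0 <= nv x.
Proof. by rewrite -ler0c -normE. Qed.

Definition cn (a : R[i]) : R := complex.Re `|a|.
Lemma cnE a : `|a| = (cn a)%:C.
Proof. exact: real_ge0E. Qed.
Lemma cn_ge0 a : 0 <= cn a.
Proof. by rewrite -ler0c -cnE. Qed.
Lemma cn_def a : cn a = Num.sqrt (complex.Re a ^+ 2 + complex.Im a ^+ 2).
Proof. by rewrite /cn normc_def. Qed.

Lemma nvZ a x : nv (a *: x) = cn a * nv x.
Proof. by rewrite /nv normrZ cnE normE -rmorphM. Qed.

Lemma nvD x y : nv (x + y) <= nv x + nv y.
Proof. by have := ler_normD x y; rewrite !normE -rmorphD lecR. Qed.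

Lemma nvN x : nv (- x) = nv x.
Proof. by rewrite /nv normrN. Qed.

Lemma nv0 : nv 0 = 0.
Proof. by rewrite /nv normr0. Qed.

Lemma nv_eq0 x : nv x = 0 -> x = 0.
Proof. by move=> h; apply/normr0_eq0; rewrite normE h. Qed.

Lemma le_normE (M : R) x y : (`|x| <= M%:C * `|y|) = (nv x <= M * nv y).
Proof. by rewrite !normE -rmorphM lecR. Qed.

End Basics.

Section IP.
Variables (R : realType) (V : completeNormedModType R[i]) (ip : V -> V -> R[i]).
Hypothesis hip : inner_product ip.

Lemma ip0l z : ip 0 z = 0.
Proof.
case: hip => h _ _; have := h 1 0 0 z; rewrite scale1r addr0 mul1r.
by move=> e; apply: (addrI (ip 0 z)); rewrite addr0 -e.
Qed.

Lemma ipDl x y z : ip (x + y) z = ip x z + ip y z.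
Proof. by case: hip => h _ _; have := h 1 x y z; rewrite scale1r mul1r. Qed.

Lemma ipZl a x z : ip (a *: x) z = a * ip x z.
Proof. by case: hip => h _ _; have := h a x 0 z; rewrite !addr0 ip0l addr0. Qed.

Lemma ipNl x z : ip (- x) z = - ip x z.
Proof. by rewrite -scaleN1r ipZl mulN1r. Qed.

Lemma ipC x y : ip y x = (ip x y)^*.
Proof. by case: hip. Qed.

Lemma ipDr x y z : ip z (x + y) = ip z x + ip z y.
Proof. by rewrite ipC ipDl rmorphD /= -!ipC. Qed.

Lemma ipZr a x z : ip z (a *: x) = a^* * ip z x.
Proof. by rewrite ipC ipZl rmorphM /= -!ipC. Qed.

Lemma ip0r z : ip z 0 = 0.
Proof. by rewrite ipC ip0l conjc0. Qed.

Lemma ip_self x : ip x x = (nv x ^+ 2)%:C.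
Proof. by case: hip => _ _ ->; rewrite normE -rmorphXn. Qed.

Lemma Re_conj (a : R[i]) : complex.Re (a^*) = complex.Re a.
Proof. by case: a. Qed.

Lemma Re_ipC x y : complex.Re (ip y x) = complex.Re (ip x y).
Proof. by rewrite ipC Re_conj. Qed.

Lemma ip_expand (s t : R) x y :
  complex.Re (ip (s%:C *: x + t%:C *: y) (s%:C *: x + t%:C *: y)) =
  s ^+ 2 * nv x ^+ 2 + 2 * s * t * complex.Re (ip x y) + t ^+ 2 * nv y ^+ 2.
Proof.
rewrite !ipDl !ipZl !ipDr !ipZr /= !ip_self.
have := Re_ipC x y; case: (ip x y) => p q; case: (ip y x) => p' q' /= ->.
ring.
Qed.

End IP.

Section CS.
Variables (R : realType) (V : completeNormedModType R[i]) (ip : V -> V -> R[i]).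
Hypothesis hip : inner_product ip.

Lemma CS x y : complex.Re (ip x y) <= nv x * nv y.
Proof.
have h := ip_expand hip (nv y) (- nv x) x y.
have h0 := nv_ge0 x; have h1 := nv_ge0 y.
have : 0 <= complex.Re (ip ((nv y)%:C *: x + (- nv x)%:C *: y)
                 ((nv y)%:C *: x + (- nv x)%:C *: y)).
  by rewrite ip_self //=; apply: sqr_ge0.
rewrite h => H.
have [y0|ypos] := eqVneq (nv y) 0.
  by rewrite (nv_eq0 y0) ip0r // nv0 mulr0.
have [x0|xpos] := eqVneq (nv x) 0.
  by rewrite (nv_eq0 x0) ip0l // nv0 mul0r.
have hx : 0 < nv x by rewrite lt_def xpos h0.
have hy : 0 < nv y by rewrite lt_def ypos h1.
have p0 : 0 < nv x * nv y by apply: mulr_gt0.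
set rho := complex.Re (ip x y) in H *.
have H' : 0 <= (nv x * nv y) * (nv x * nv y - rho).
  have -> : (nv x * nv y) * (nv x * nv y - rho) =
    (nv y ^+ 2 * nv x ^+ 2 + 2 * nv y * - nv x * rho + (- nv x) ^+ 2 * nv y ^+ 2) / 2.
    by field.
  by apply: divr_ge0.
rewrite -subr_ge0; move: H'; rewrite pmulr_rge0 //.
Qed.

End CS.

Section Fix.
Variables (R : realType) (V : completeNormedModType R[i]).

Lemma fixpt (f : V -> V) (q : R) : 0 <= q < 1 ->
  (forall a b, nv (f a - f b) <= q * nv (a - b)) -> exists x, f x = x.
Proof.
move=> /andP[q0 q1] fL.
pose y n := iter n f 0.
pose d := nv (f 0 - 0).
have d0 : 0 <= d := nv_ge0 _.
have step n : nv (y n.+1 - y n) <= q ^+ n * d.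
  elim: n => [|n IH]; first by rewrite expr0 mul1r.
  have -> : y n.+2 = f (y n.+1) by [].
  have -> : y n.+1 = f (y n) by [].
  apply: (le_trans (fL _ _)); rewrite exprS -mulrA; exact: ler_wpM2l.
have dist n m : (1 - q) * nv (y (n + m)%N - y n) <= q ^+ n * d * (1 - q ^+ m).
  elim: m => [|m IH]; first by rewrite addn0 subrr nv0 mulr0 expr0 subrr mulr0.
  have e : y (n + m.+1)%N - y n = (y (n + m).+1 - y (n + m)%N) + (y (n + m)%N - y n).
    by rewrite addnS addrA subrK.
  rewrite e; have := nvD (y (n + m).+1 - y (n + m)%N) (y (n + m)%N - y n).
  have := step (n + m)%N; rewrite exprD exprS => s1 s2.
  have qn0 : 0 <= q ^+ n := exprn_ge0 _ q0.
  have qm0 : 0 <= q ^+ m := exprn_ge0 _ q0.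
  have hq : 0 <= 1 - q by lra.
  have t1 := ler_wpM2l hq s2. have t2 := ler_wpM2l hq s1.
  nra.
have distN n m : (n <= m)%N -> nv (y m - y n) <= q ^+ n * d / (1 - q).
  move=> /subnKC <-; rewrite ler_pdivlMr ?subr_gt0 // mulrC.
  apply: (le_trans (dist n (m - n)%N)).
  have : 0 <= q ^+ (m - n) := exprn_ge0 _ q0.
  have : 0 <= q ^+ n := exprn_ge0 _ q0.
  move=> h1 h2; have := mulr_ge0 h1 d0; nra.
have qcvg : (fun n : nat => q ^+ n) @ \oo --> (0 : R).
  by apply: cvg_expr; rewrite ger0_norm.
have cy : cvgn y.
  apply/cauchy_cvgP/cauchy_exP => e e0.
  have e'0 : 0 < complex.Re e by move: e0; rewrite ltcE => /andP[_].
  have : 0 < complex.Re e * (1 - q) / (d + 1).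
    by apply: divr_gt0; [apply: mulr_gt0; rewrite ?subr_gt0 | lra].
  move=> ep; have [N _ HN] := proj1 (cvgrPdist_lt _ _) qcvg _ ep.
  exists (y N); exists N => // n /= hn.
  rewrite -ball_normE /=.
  have := HN N (leqnn N); rewrite /= sub0r normrN ger0_norm ?exprn_ge0 // => hq.
  have := distN _ _ hn => hd.
  rewrite (real_ge0E (ltW e0)) -opprB normrN normE ltcR.
  apply: (le_lt_trans hd).
  have hq1 : 0 < 1 - q by lra.
  rewrite ltr_pdivrMr //; rewrite ltr_pdivlMr ?ltr_wpDl // in hq.
  have : 0 <= q ^+ N := exprn_ge0 _ q0.
  nra.
set l := limn y.
have yl : y @ \oo --> l := cy.
have H e : 0 < e -> nv (f l - l) < e.
  move=> e0.
  have [N _ HN] := proj1 (cvgrPdist_lt _ _) yl ((e / 2)%:C) (ltac:(rewrite ltcR; lra)).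
  have h1 := HN N (leqnn N); have h2 := HN N.+1 (leqnSn N).
  rewrite normE ltcR /= in h1; rewrite normE ltcR /= in h2.
  have -> : f l - l = (f l - f (y N)) + (y N.+1 - l) by rewrite /= addrA subrK.
  apply: (le_lt_trans (nvD _ _)).
  have h3 := fL l (y N).
  have -> : nv (y N.+1 - l) = nv (l - f (y N)) by rewrite -nvN opprB.
  have := nv_ge0 (l - y N).
  nra.
exists l; apply/eqP; rewrite -subr_eq0; apply/eqP; apply: nv_eq0.
have := nv_ge0 (f l - l); rewrite le_eqVlt => /orP[/eqP<-//|pos].
by have := H _ pos; rewrite ltxx.
Qed.

End Fix.

Lemma zmod_aux (W : zmodType) (a b u va vb : W) :
  (a + (u - va)) - (b + (u - vb)) = (a - b) + -(va - vb).
Proof.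
rewrite opprD addrACA; congr (_ + _).
by rewrite opprB addrC addrA subrK opprB.
Qed.

Lemma C1 (R : realType) : (1%:C : R[i]) = 1.
Proof. by []. Qed.
Lemma CN (R : realType) (x : R) : ((- x)%:C : R[i]) = - x%:C.
Proof. by apply/eqP; rewrite eq_complex /= oppr0 !eqxx. Qed.

Section Coercive.
Variables (R : realType) (V : completeNormedModType R[i]) (ip : V -> V -> R[i]).
Hypothesis hip : inner_product ip.

Definition linop (B : V -> V) := forall (a : R[i]) x y, B (a *: x + y) = a *: B x + B y.

Lemma lin0 B : linop B -> B 0 = 0.
Proof.
move=> hB; have := hB 1 0 0; rewrite !scale1r addr0.
by move=> e; apply: (addrI (B 0)); rewrite addr0 -e.
Qed.

Lemma linZ B : linop B -> forall a x, B (a *: x) = a *: B x.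
Proof. by move=> hB a x; have := hB a x 0; rewrite !addr0 lin0 // addr0. Qed.

Lemma linD B : linop B -> forall x y, B (x + y) = B x + B y.
Proof. by move=> hB x y; have := hB 1 x y; rewrite !scale1r. Qed.

Lemma linN B : linop B -> forall x, B (- x) = - B x.
Proof. by move=> hB x; rewrite -scaleN1r linZ // scaleN1r. Qed.

Lemma linB B : linop B -> forall x y, B (x - y) = B x - B y.
Proof. by move=> hB x y; rewrite linD // linN. Qed.

Lemma coercive_inv (B : V -> V) (k M : R) :
  linop B -> (forall x, nv (B x) <= M * nv x) -> 0 < k ->
  (forall x, k * nv x ^+ 2 <= complex.Re (ip (B x) x)) ->
  exists S : V -> V, [/\ linop S, (forall y, k * nv (S y) <= nv y),
     (forall x, S (B x) = x) & (forall y, B (S y) = y)].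
Proof.
move=> hB hM k0 hk.
have lb x : k * nv x <= nv (B x).
  have h := hk x; have c := CS hip (B x) x.
  have [x0|xpos] := eqVneq (nv x) 0; first by rewrite x0 mulr0 nv_ge0.
  have hx : 0 < nv x by rewrite lt_def xpos nv_ge0.
  nra.
have inj x y : B x = B y -> x = y.
  move=> e; apply/eqP; rewrite -subr_eq0; apply/eqP; apply: nv_eq0.
  have := lb (x - y); rewrite linB // e subrr nv0 => h.
  have := nv_ge0 (x - y); nra.
pose M' := Num.max M 0 + k.
have MM : M <= Num.max M 0 by rewrite le_max lexx.
have M0 : 0 <= Num.max M 0 by rewrite le_max lexx orbT.
have M'pos : 0 < M' by rewrite /M'; lra.
have hM' x : nv (B x) <= M' * nv x.
  apply: (le_trans (hM x)); have := nv_ge0 x; rewrite /M'; nra.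
have surj y : exists x, B x = y.
  pose eps := k / (M' * M').
  have eps0 : 0 < eps by apply: divr_gt0 => //; apply: mulr_gt0.
  have epsM : eps * (M' * M') = k by rewrite /eps mulfVK // mulf_neq0 // gt_eqF.
  pose r := k / M'.
  have r0 : 0 < r by apply: divr_gt0.
  have r1 : r <= 1 by rewrite /r ler_pdivrMr // mul1r /M'; lra.
  have rM : r * M' = k by rewrite /r mulfVK // gt_eqF.
  pose q := 1 - r ^+ 2 / 2.
  pose f x := x + eps%:C *: (y - B x).
  have [x fx] : exists x, f x = x.
    apply: (@fixpt _ _ f q); first by apply/andP; split; rewrite /q; nra.
    move=> a b.
    have -> : f a - f b = 1%:C *: (a - b) + (- eps)%:C *: B (a - b).
      rewrite C1 scale1r CN scaleNr /f !scalerBr zmod_aux; congr (_ + _).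
      by rewrite (linB hB) scalerBr opprB.
    set d := a - b.
    have e2 := ip_expand hip 1 (- eps) d (B d).
    have h1 := hk d. have h2 := hM' d.
    have h3 : complex.Re (ip d (B d)) = complex.Re (ip (B d) d) by apply: Re_ipC.
    have h4 : nv (1%:C *: d + (- eps)%:C *: B d) ^+ 2 =
      complex.Re (ip (1%:C *: d + (- eps)%:C *: B d) (1%:C *: d + (- eps)%:C *: B d)).
      by rewrite ip_self.
    rewrite e2 h3 in h4.
    set X := nv (1%:C *: d + (- eps)%:C *: B d) in h4 *.
    have X0 : 0 <= X := nv_ge0 _.
    have d0 : 0 <= nv d := nv_ge0 _.
    have Bd0 : 0 <= nv (B d) := nv_ge0 _.
    have h5 : nv (B d) ^+ 2 <= (M' * nv d) ^+ 2 by rewrite ler_pXn2r // ?nnegrE //; nra.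
    have h6 : X ^+ 2 <= (q * nv d) ^+ 2.
      have e0 : 0 <= 2 * eps by lra.
      have t1 := ler_wpM2l e0 h1.
      have e1 : 0 <= eps ^+ 2 by apply: sqr_ge0.
      have t2 := ler_wpM2l e1 h5.
      have e3 : eps ^+ 2 * (M' * nv d) ^+ 2 = eps * k * nv d ^+ 2.
        by rewrite -epsM; ring.
      have e4 : eps * k = r ^+ 2.
        by rewrite /eps /r; field; rewrite gt_eqF.
      rewrite e3 e4 in t2.
      have t1' : 2 * r ^+ 2 * nv d ^+ 2 <= 2 * eps * complex.Re (ip (B d) d).
        by have -> : 2 * r ^+ 2 * nv d ^+ 2 = 2 * eps * (k * nv d ^+ 2) by rewrite -e4; ring.
      have n2 : 0 <= nv d ^+ 2 by apply: sqr_ge0.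
      have : (q * nv d) ^+ 2 = (1 - r ^+ 2) * nv d ^+ 2 + (r ^+ 2 / 2) ^+ 2 * nv d ^+ 2.
        by rewrite /q; field.
      move=> ->.
      have : 0 <= (r ^+ 2 / 2) ^+ 2 * nv d ^+ 2 by apply: mulr_ge0 => //; apply: sqr_ge0.
      rewrite h4.
      nra.
    have q0 : 0 <= q by rewrite /q; nra.
    by rewrite -(ler_pXn2r (n := 2)) // ?nnegrE //; apply: mulr_ge0.
  exists x; move: fx; rewrite /f => /eqP; rewrite -subr_eq0 addrAC subrr add0r scaler_eq0.
  case/orP => [/eqP/complexI/eqP|]; first by rewrite gt_eqF.
  by rewrite subr_eq0 => /eqP.
pose S y := proj1_sig (cid (surj y)).
have BS y : B (S y) = y := proj2_sig (cid (surj y)).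
exists S; split => //.
- by move=> a x y; apply: inj; rewrite BS hB !BS.
- by move=> y; have := lb (S y); rewrite BS.
- by move=> x; apply: inj; rewrite BS.
Qed.
End Coercive.

Section Scalar.
Variable R : realType.

Lemma Re_expand (u z : R[i]) (n t q : R) :
  complex.Re (u * (z * (n%:C + 'i * t%:C) - q%:C)) =
  n * complex.Re (u * z) - t * complex.Im (u * z) - q * complex.Re u.
Proof. by case: u => u1 u2; case: z => z1 z2 /=; ring. Qed.

Lemma key (tau k n t q : R) (u z : R[i]) : 0 <= tau -> 0 <= n -> `|t| <= tau * n ->
  0 <= q -> complex.Re u <= 0 ->
  k <= complex.Re (u * z) - tau * `|complex.Im (u * z)| ->
  k * n <= complex.Re (u * (z * (n%:C + 'i * t%:C) - q%:C)).
Proof.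
move=> tau0 n0 ht q0 u0 hk; rewrite Re_expand.
set P := complex.Re (u * z) in hk *; set I := complex.Im (u * z) in hk *.
have h1 : t * I <= tau * n * `|I|.
  apply: (le_trans (ler_norm _)); rewrite normrM; apply: ler_wpM2r => //.
have h2 := ler_wpM2l n0 hk.
have h3 : 0 <= - (q * complex.Re u) by rewrite -mulrN; apply: mulr_ge0; lra.
nra.
Qed.

Lemma aux_pos (tau a b r : R) : 0 <= tau -> 0 <= a -> 0 < b -> r ^+ 2 = a ^+ 2 + b ^+ 2 ->
  0 <= r -> a * (tau + 2) < r -> r / (tau + 2) <= b - tau * a.
Proof.
move=> t0 a0 b0 hr r0 har.
have s2 : (a * (tau + 2)) ^+ 2 < r ^+ 2.
  by rewrite ltr_pXn2r // ?nnegrE //; apply: mulr_ge0 => //; lra.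
have s3 : a ^+ 2 * ((tau + 1) * (tau + 3)) < b ^+ 2.
  by move: s2; rewrite hr; nra.
have s4 : ((1 + tau) * r) ^+ 2 <= (b * (tau + 2)) ^+ 2.
  rewrite exprMn hr exprMn.
  have : 0 <= a ^+ 2 by apply: sqr_ge0.
  nra.
have s5 : (1 + tau) * r <= b * (tau + 2).
  by move: s4; rewrite ler_pXn2r // ?nnegrE //; [apply: mulr_ge0; lra | apply: mulr_ge0; lra].
rewrite ler_pdivrMr; last by lra.
nra.
Qed.

Lemma cnC (a b : R) : cn (a +i* b) = Num.sqrt (a ^+ 2 + b ^+ 2).
Proof. by rewrite cn_def. Qed.

Lemma choose_u (tau : R) (z : R[i]) : 0 <= tau -> z != 0 ->
  complex.Re z < cn z / (tau + 2) ->
  exists u : R[i], [/\ cn u = 1, complex.Re u <= 0 &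
     cn z / (tau + 2) <= complex.Re (u * z) - tau * `|complex.Im (u * z)|].
Proof.
move=> t0; case: z => a b; rewrite cnC /= => z0.
set r := Num.sqrt _.
have s0 : 0 <= a ^+ 2 + b ^+ 2 by apply: addr_ge0; apply: sqr_ge0.
have hr : r ^+ 2 = a ^+ 2 + b ^+ 2 by rewrite sqr_sqrtr.
have r0 : 0 <= r by apply: sqrtr_ge0.
have t2 : 0 < tau + 2 by lra.
rewrite ltr_pdivlMr // => har.
have [aneg|apos] := ltP a 0.
  have rpos : 0 < r.
    rewrite lt_def r0 andbT; apply/eqP => r00.
    by move: hr; rewrite r00 expr0n /=; nra.
  exists ((a / r) +i* (- b / r)); split.
  - rewrite cnC -[1]sqrtr1; congr Num.sqrt.
    by rewrite !expr_div_n -mulrDl sqrrN -hr divff // expf_neq0 // gt_eqF.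
  - by rewrite /=; apply: ltW; rewrite pmulr_llt0 ?invr_gt0.
  - rewrite /=.
    have -> : a / r * b + - b / r * a = 0 by ring.
    have -> : a / r * a - - b / r * b = r.
      have -> : a / r * a - - b / r * b = (a ^+ 2 + b ^+ 2) / r by ring.
      by rewrite -hr expr2 mulfK // gt_eqF.
    rewrite normr0 mulr0 subr0 ler_pdivrMr //; nra.
have [bpos|bneg|b00] := ltgtP b 0.
- exists (0 +i* 1); split.
  + by rewrite cnC expr0n /= add0r expr1n sqrtr1.
  + by rewrite /=.
  + rewrite /=.
    have -> : 0 * a - 1 * b = - b by ring.
    have -> : 0 * b + 1 * a = a by ring.
    rewrite ger0_norm //; apply: aux_pos => //; first by lra.
    by rewrite sqrrN.
- exists (0 +i* (- 1)); split.
  + by rewrite cnC expr0n /= add0r sqrrN expr1n sqrtr1.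
  + by rewrite /=.
  + rewrite /=.
    have -> : 0 * a - - 1 * b = b by ring.
    have -> : 0 * b + - 1 * a = - a by ring.
    by rewrite normrN ger0_norm //; apply: aux_pos.
- exfalso; move: hr; rewrite b00 expr0n addr0 => hr.
  have ra : r = a by apply/eqP; rewrite -(eqrXn2 (n := 2)) // ?hr //.
  have : 0 <= a by [].
  move: har; rewrite ra; nra.
Qed.

End Scalar.

Section Sector.
Variable R : realType.

Lemma notsector (c th : R) (z : R[i]) : 0 <= th <= pi -> cos th <= c ->
  ~ sector th z -> z != 0 /\ complex.Re z < c * cn z.
Proof.
move=> /andP[th0 thpi] hc ns.
have z0 : z != 0 by apply/eqP => e; apply: ns; left.
split => //; rewrite ltNge; apply/negP => hz; apply: ns; right.
move: z z0 hz => [a b]; rewrite cnC /= => z0 hz.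
have zz : (a +i* b != 0) by [].
set r := Num.sqrt _ in hz *.
have s0 : 0 <= a ^+ 2 + b ^+ 2 by apply: addr_ge0; apply: sqr_ge0.
have hr : r ^+ 2 = a ^+ 2 + b ^+ 2 by rewrite sqr_sqrtr.
have r0 : 0 <= r by apply: sqrtr_ge0.
have rpos : 0 < r.
  rewrite lt_def r0 andbT; apply/eqP => r00.
  move: hr; rewrite r00 expr0n /= => h.
  have a0 : a = 0 by apply/eqP; rewrite -sqrf_eq0; apply/eqP; nra.
  have b0 : b = 0 by apply/eqP; rewrite -sqrf_eq0; apply/eqP; nra.
  by move: z0; rewrite a0 b0 eqxx.
pose x := a / r.
have hx : c <= x by rewrite /x ler_pdivlMr // mulrC.
have x1 : -1 <= x <= 1.
  have : a ^+ 2 <= r ^+ 2 by rewrite hr; have := sqr_ge0 b; lra.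
  move=> h; rewrite /x -ler_norml normf_div (ger0_norm r0) ler_pdivrMr // mul1r.
  by rewrite -(ler_pXn2r (n := 2)) // ?nnegrE // real_normK ?num_real.
have xin : x \in `[-1, 1]%R by rewrite in_itv.
pose p0 := acos x.
have p0a : 0 <= p0 := acos_ge0 x1.
have p0b : p0 <= pi := acos_lepi x1.
have hcos : cos p0 = x := acosK xin.
have p0th : p0 <= th.
  rewrite leNgt; apply/negP => lt.
  have hp0 : p0 \in `[0, pi]%R by rewrite in_itv /= p0a p0b.
  have hth : th \in `[0, pi]%R by rewrite in_itv /= th0 thpi.
  move: lt; rewrite -(ltr_cos hth hp0) hcos => lt; lra.
have e1 : 1 - x ^+ 2 = (b / r) ^+ 2.
  have r2 : r ^+ 2 != 0 by rewrite expf_neq0 // gt_eqF.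
  rewrite /x !expr_div_n -{1}(divff r2) -mulrBl hr; congr (_ / _); ring.
have hsin : sin p0 = `|b| / r.
  by rewrite sin_acos // e1 sqrtr_sqr normf_div (ger0_norm r0).
exists (if 0 <= b then p0 else - p0).
rewrite cnE cnC -/r; split.
  by case: ifP => _; rewrite ?normrN ger0_norm.
have rn0 : r != 0 by rewrite gt_eqF.
case: (lerP 0 b) => hb; rewrite ?cosN ?sinN hcos hsin;
  apply/eqP; rewrite eq_complex /=; apply/andP; split; apply/eqP; rewrite /x.
- by field.
- by rewrite ger0_norm //; field.
- by field.
- by rewrite ltr0_norm //; field.
Qed.

End Sector.

Section Main.
Variables (R : realType) (V : completeNormedModType R[i]) (ip : V -> V -> R[i]) (Top Qop : V -> V).
Variables (tau tauQ : R).
Hypotheses (hip : inner_product ip) (Tlin : linop Top) (Qlin : linop Qop)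
  (tau0 : 0 <= tau) (tauQ0 : 0 <= tauQ)
  (Tb : forall x, nv (Top x) <= tau * nv x) (Qb : forall x, nv (Qop x) <= tauQ * nv x)
  (Tsa : selfadjoint ip Top) (Qpos : forall x, 0 <= ip (Qop x) x).

Definition B0 (x : V) := x + 'i *: Top x.

Lemma linop_add (B C : V -> V) : linop B -> linop C -> linop (fun x => B x + C x).
Proof.
move=> hB hC a x y; rewrite hB hC scalerDr.
by rewrite addrACA.
Qed.

Lemma linop_scale (c : R[i]) (B : V -> V) : linop B -> linop (fun x => c *: B x).
Proof. by move=> hB a x y; rewrite hB scalerDr !scalerA mulrC. Qed.

Lemma linop_opp (B : V -> V) : linop B -> linop (fun x => - B x).
Proof. by move=> hB a x y; rewrite hB opprD scalerN. Qed.

Lemma linop_id : linop (fun x : V => x).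
Proof. by []. Qed.

Lemma linop_comp (B C : V -> V) : linop B -> linop C -> linop (fun x => B (C x)).
Proof. by move=> hB hC a x y; rewrite hC hB. Qed.

Lemma B0lin : linop B0.
Proof. exact: (linop_add linop_id (linop_scale _ Tlin)). Qed.

Lemma cn_i : cn ('i : R[i]) = 1.
Proof. by rewrite cnC expr0n /= add0r expr1n sqrtr1. Qed.

Lemma B0b x : nv (B0 x) <= (1 + tau) * nv x.
Proof.
apply: (le_trans (nvD _ _)); rewrite nvZ cn_i mul1r.
by have := Tb x; lra.
Qed.

Lemma ipT_real x : ip (Top x) x = (complex.Re (ip (Top x) x))%:C.
Proof.
have : ip (Top x) x = (ip (Top x) x)^*.
  by rewrite [in LHS]Tsa -(ipC hip).
case: (ip (Top x) x) => p q /= /eqP; rewrite eq_complex /= => /andP[_ /eqP h].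
by apply/eqP; rewrite eq_complex /= eqxx /=; apply/eqP; lra.
Qed.

Lemma tbound x : `|complex.Re (ip (Top x) x)| <= tau * nv x ^+ 2.
Proof.
have h1 := CS hip (Top x) x; have h2 := CS hip (- Top x) x.
rewrite ipNl // nvN in h2.
have := Tb x; have := nv_ge0 x => n0 t1.
have h3 : nv (Top x) * nv x <= tau * nv x ^+ 2 by rewrite expr2 mulrA ler_wpM2r.
rewrite ler_norml; apply/andP; split; move: h2 => /=; lra.
Qed.

Lemma ipQ_real x : ip (Qop x) x = (complex.Re (ip (Qop x) x))%:C /\ 0 <= complex.Re (ip (Qop x) x).
Proof.
split; first exact: real_ge0E.
by have := Qpos x; rewrite lecE => /andP[_].
Qed.

Lemma B0coer x : 1 * nv x ^+ 2 <= complex.Re (ip (B0 x) x).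
Proof.
rewrite /B0 ipDl // ipZl // ip_self // ipT_real /=.
lra.
Qed.


Section Res.
Variable S0 : V -> V.
Hypotheses (S0lin : linop S0) (S0b : forall y, 1 * nv (S0 y) <= nv y)
  (S0B0 : forall x, S0 (B0 x) = x) (B0S0 : forall y, B0 (S0 y) = y).

Lemma cn_gt0 (z : R[i]) : z != 0 -> 0 < cn z.
Proof.
move=> z0; rewrite lt_def cn_ge0 andbT; apply/eqP => h.
by move: z0; rewrite -normr_eq0 cnE h eqxx.
Qed.

Lemma resolvent (z : R[i]) : z != 0 -> complex.Re z < cn z / (tau + 2) ->
  exists Rz : V -> V, [/\ linop Rz,
     (forall y, cn z * nv (Rz y) <= ((1 + tau) * (tau + 2)) * nv y),
     (forall x, Rz (z *: x - Qop (S0 x)) = x) &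
     (forall y, z *: Rz y - Qop (S0 (Rz y)) = y)].
Proof.
move=> z0 hz; have ta0 := tau0; have tq0 := tauQ0.
have [u [u1 u0 hu]] := choose_u tau0 z0 hz.
have czpos := cn_gt0 z0.
have t2 : 0 < tau + 2 by lra.
pose k := cn z / (tau + 2).
have k0 : 0 < k by apply: divr_gt0.
pose W x := z *: B0 x - Qop x.
have Wlin : linop W.
  exact: (linop_add (linop_scale _ B0lin) (linop_opp Qlin)).
pose B' x := u *: W x.
have B'lin : linop B' by exact: linop_scale.
have B'b x : nv (B' x) <= (cn z * (1 + tau) + tauQ) * nv x.
  rewrite /B' /W nvZ u1 mul1r; apply: (le_trans (nvD _ _)).
  rewrite nvN nvZ; have := B0b x; have := Qb x; have := nv_ge0 x; nra.
have B'c x : k * nv x ^+ 2 <= complex.Re (ip (B' x) x).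
  rewrite /B' /W ipZl // ipDl // ipZl // ipNl // /B0 ipDl // ipZl // ip_self // ipT_real //.
  have [-> q0] := ipQ_real x.
  have -> : z * ((nv x ^+ 2)%:C + 'i * (complex.Re (ip (Top x) x))%:C) +
      - (complex.Re (ip (Qop x) x))%:C =
      z * ((nv x ^+ 2)%:C + 'i * (complex.Re (ip (Top x) x))%:C) -
      (complex.Re (ip (Qop x) x))%:C by [].
  exact: (key tau0 (sqr_ge0 _) (tbound x) q0 u0 hu).
have [S' [S'lin S'b S'B' B'S']] := coercive_inv hip B'lin B'b k0 B'c.
have un0 : u != 0 by apply/eqP => e; move: u1; rewrite e /cn normr0 /=; lra.
pose SW y := S' (u *: y).
have WSW y : W (SW y) = y.
  by apply: (scalerI un0); have := B'S' (u *: y).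
have SWW x : SW (W x) = x by rewrite /SW -/(B' x) S'B'.
have SWb y : k * nv (SW y) <= nv y.
  by have := S'b (u *: y); rewrite nvZ u1 mul1r.
exists (fun y => B0 (SW y)); split.
- apply: linop_comp; first exact: B0lin.
  by apply: linop_comp => //; apply: linop_scale; exact: linop_id.
- move=> y; apply: (le_trans (ler_wpM2l (cn_ge0 z) (B0b (SW y)))).
  have e : k * (tau + 2) = cn z by rewrite /k mulfVK // gt_eqF.
  have p0 : 0 <= (1 + tau) * (tau + 2) by apply: mulr_ge0; lra.
  have := ler_wpM2l p0 (SWb y).
  rewrite -e; nra.
- move=> x.
  have -> : z *: x - Qop (S0 x) = W (S0 x) by rewrite /W B0S0.
  by rewrite SWW B0S0.
- by move=> y; rewrite S0B0 -/(W (SW y)) WSW.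
Qed.

End Res.

Lemma main_sec : exists S : V -> V, [/\ bounded_op S, is_inverse B0 S &
  exists theta : R, theta < pi / 2 /\ sectorial (fun x => Qop (S x)) theta].
Proof.
have ta0 := tau0; have tq0 := tauQ0.
have [S0 [S0lin S0b S0B0 B0S0]] := coercive_inv hip B0lin B0b ltr01 B0coer.
have t2 : 1 < tau + 2 by lra.
pose c := (tau + 2)^-1.
have c0 : 0 < c by rewrite invr_gt0; lra.
have c1 : c < 1 by rewrite invf_lt1 //; lra.
pose theta := acos c.
have cin : c \in `[-1, 1]%R by rewrite in_itv /=; apply/andP; split; lra.
have cth : cos theta = c := acosK cin.
have th0 : 0 < theta by apply: acos_gt0; apply/andP; split; lra.
have thpi : theta < pi by apply: acos_ltpi; apply/andP; split; lra.
have pi0 := pi_gt0 R.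
have thin : theta \in `[0, pi]%R by rewrite in_itv /=; apply/andP; split; lra.
have thpi2 : theta < pi / 2.
  rewrite ltNge; apply/negP; rewrite le_eqVlt => /orP[/eqP e|lt].
    by move: cth; rewrite -e cos_pihalf; lra.
  have p2in : (pi / 2 : R) \in `[0, pi]%R by rewrite in_itv /=; apply/andP; split; lra.
  by move: lt; rewrite -(ltr_cos p2in thin) cth cos_pihalf; lra.
exists S0; split.
- split => //; exists 1 => x; rewrite le_normE; have := S0b x; lra.
- by split.
exists theta; split => //; split.
- split; first exact: linop_comp.
  exists tauQ => x; rewrite le_normE.
  apply: (le_trans (Qb _)); apply: ler_wpM2l => //; have := S0b x; lra.
- by apply/andP; split.
- move=> z hz; case: (pselect (sector theta z)) => // ns; exfalso; apply: hz.
  have [z0 hzc] := notsector (c := c) (th := theta) (ltac:(apply/andP; split; lra)) (ltac:(lra)) ns.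
  have hz' : complex.Re z < cn z / (tau + 2) by rewrite mulrC in hzc.
  have [Rz [Rlin Rb RF FR]] := resolvent S0B0 B0S0 z0 hz'.
  have czpos := cn_gt0 z0.
  exists Rz; split; last by split.
  split => //; exists ((1 + tau) * (tau + 2) / cn z) => y; rewrite le_normE.
  by rewrite mulrAC ler_pdivlMr // mulrC; exact: Rb.
- move=> th' /andP[h1 h2]; exists ((1 + tau) * (tau + 2)) => z ns S Sb [SF FS] x.
  have th'in : th' \in `[0, pi]%R by rewrite in_itv /=; apply/andP; split; lra.
  have cth' : cos th' <= c.
    by apply: ltW; rewrite -cth (ltr_cos thin th'in).
  have [z0 hzc] := notsector (c := c) (th := th') (ltac:(apply/andP; split; lra)) cth' ns.
  have hz' : complex.Re z < cn z / (tau + 2) by rewrite mulrC in hzc.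
  have [Rz [Rlin Rb RF FR]] := resolvent S0B0 B0S0 z0 hz'.
  have SR : S x = Rz x by have := SF (Rz x); rewrite /= FR.
  by rewrite le_normE nvZ SR; exact: Rb.
Qed.

End Main.

Local Close Scope classical_set_scope.
Unset Implicit Arguments.

Theorem lemma2p3 (R : realType) (V : completeNormedModType R[i])
    (ip : V -> V -> R[i]) (T Q : V -> V) :
  inner_product ip ->
  bounded_op T -> selfadjoint ip T ->
  bounded_op Q -> selfadjoint ip Q ->
  (forall x : V, 0 <= ip (Q x) x) ->
  exists S : V -> V,
    [/\ bounded_op S, is_inverse (fun x => x + (0 +i* 1) *: T x) S &
        exists theta : R, theta < pi / 2 /\ sectorial (fun x => Q (S x)) theta].
Proof.
move=> hip [Tlin [MT hMT]] Tsa [Qlin [MQ hMQ]] Qsa Qpos.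
have Tb x : nv (T x) <= `|MT| * nv x.
  have := hMT x; rewrite le_normE => h; apply: (le_trans h).
  by apply: ler_wpM2r; [exact: nv_ge0 | exact: ler_norm].
have Qb x : nv (Q x) <= `|MQ| * nv x.
  have := hMQ x; rewrite le_normE => h; apply: (le_trans h).
  by apply: ler_wpM2r; [exact: nv_ge0 | exact: ler_norm].
exact: (main_sec hip Tlin Qlin (normr_ge0 MT) (normr_ge0 MQ) Tb Qb Tsa Qpos).
Qed.
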